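(* Let $\mathcal{X}=\langle\mathsf{S},\mathsf{po},\mathsf{rf}\rangle$ be a $\textsf{VSC-read}$ instance and let $\langle\mathcal{X}',\mathsf{cap}',\mathsf{rf}'\rangle$ be the $\textsf{VCh-rf}$ instance constructed from it as described below. Then $\mathcal{X}$ is sequentially consistent if and only if $\langle\mathcal{X}',\mathsf{cap}',\mathsf{rf}'\rangle$ is consistent.
   Context: Channels and events. Each channel $\mathtt{ch}$ has a capacity $\mathsf{cap}(\mathtt{ch})\in\mathbb{N}$; $\mathtt{ch}$ is synchronous if $\mathsf{cap}(\mathtt{ch})=0$ and asynchronous otherwise. An event is a tuple $e=\langle id,\tau,\mathsf{op}(\mathtt{ch},\mathsf{val})\rangle$ with a unique identifier $id$, a thread $\tau$, an operation $\mathsf{op}\in\{\mathtt{snd},\mathtt{rcv}\}$, a channel $\mathtt{ch}$ and a value $\mathsf{val}$. An execution is a finite sequence $\sigma$ of distinct events. $\sigma$ is well-formed (w.r.t. $\mathsf{cap}$) if: (i) for every asynchronous $\mathtt{ch}$ and every prefix $\pi$ of $\sigma$, $R_\pi(\mathtt{ch})\le S_\pi(\mathtt{ch})\le R_\pi(\mathtt{ch})+\mathsf{cap}(\mathtt{ch})$, where $S_\pi(\mathtt{ch})$, $R_\pi(\mathtt{ch})$ are the numbers of send, resp. receive, events on $\mathtt{ch}$ in $\pi$; (ii) for every synchronous $\mathtt{ch}$, every send on $\mathtt{ch}$ is immediately followed in $\sigma$ by a receive on $\mathtt{ch}$ of a different thread, and every receive on $\mathtt{ch}$ is immediately preceded in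 $\sigma$ by a send on $\mathtt{ch}$ of a different thread; (iii) for every channel $\mathtt{ch}$ and every $i$, if $\sigma$ contains an $i$-th receive on $\mathtt{ch}$, then the $i$-th send on $\mathtt{ch}$ has the same value as it. The program order $\mathsf{po}_\sigma$ is the set of pairs $(e,f)$ with $e$ before $f$ in $\sigma$ and in the same thread; the reads-from relation $\mathsf{rf}_\sigma$ is the set of pairs $(s,r)$ such that for some channel $\mathtt{ch}$ and some $i$, $s$ is the $i$-th send and $r$ the $i$-th receive on $\mathtt{ch}$ in $\sigma$. An abstract execution is $\mathcal{X}=\langle \mathsf{S},\mathsf{po}\rangle$ where $\mathsf{S}$ is a finite set of events and $\mathsf{po}$ is a strict order that totally orders the events of each thread and relates no events of different threads. An instance of $\textsf{VCh-rf}$ is $\langle\mathcal{X},\mathsf{cap},\mathsf{rf}\rangle$ where $\mathsf{cap}$ is a capacity function on the channels occurring in $\mathsf{S}$ and $\mathsf{rf}$ is a set of pairs $(s,r)$ of a send and a receive event of $\mathsf{S}$ on the same channel; it is consistent if there is an execution $\sigma$ whose set of events is $\mathsf{S}$, with $\mathsf{po}_\sigma=\mathsf{po}$, $\sigma$ well-formed, and $\mathsf{rf}_\sigma=\mathsf{rf}$ (values are irrelevant here). $\textsf{VSC-read}$. An instance is $\langle\mathsf{S},\mathsf{po},\mathsf{rf}\rangle$ where $\mathsf{S}$ is a finite set of events of the form $\langle\tau,\mathsf{r}(x)\rangle$ (read of register $x$ by thread $\tau$) or $\langle\tau,\mathsf{w}(x)\rangle$ (write), $\mathsf{po}$ totally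 orders the events of each thread and relates no events of different threads, and $\mathsf{rf}$ maps each read to a write of the same register. It is sequentially consistent if there is a total order on $\mathsf{S}$ extending $\mathsf{po}$ such that for every $(w,r)\in\mathsf{rf}$ on register $x$, $w$ precedes $r$ and no other write to $x$ lies between $w$ and $r$. Construction. Let $\mathcal{R}$ be the set of registers. For a write $e$ let $p_e$ be the number of reads $f$ with $(e,f)\in\mathsf{rf}$, fix an arbitrary enumeration $f_1,\dots,f_{p_e}$ of them, and for $x\in\mathcal{R}$ let $m_x=\max\{p_e: e\text{ a write on }x\}$. $\mathcal{X}'$ has the same threads, channels $\{\mathtt{ch}_x^i: x\in\mathcal{R},1\le i\le m_x\}\cup\{\ell\}$, and $\mathsf{cap}'\equiv1$. Each $e\in\mathsf{S}$ of thread $\tau$ is replaced by a sequence $M(e)$ of fresh events of thread $\tau$: for a write $e$ on $x$, $M(e)=\mathtt{snd}(\ell)\cdot\mathtt{snd}(\mathtt{ch}_x^1)\cdots\mathtt{snd}(\mathtt{ch}_x^{m_x})\cdot\mathtt{rcv}(\mathtt{ch}_x^{p_e+1})\cdots\mathtt{rcv}(\mathtt{ch}_x^{m_x})\cdot\mathtt{rcv}(\ell)$; for the read $f_i$ (the $i$-th read of write $e$ on $x$), $M(f_i)=\mathtt{snd}(\ell)\cdot\mathtt{rcv}(\mathtt{ch}_x^i)\cdot\mathtt{rcv}(\ell)$. $\mathsf{S}'$ is the union of all events of all $M(e)$; $\mathsf{po}'$ orders events within each $M(e)$ by their position and orders all events of $M(e)$ before all events of $M(e')$ whenever $(e,e')\in\mathsf{po}$.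 $\mathsf{rf}'$: in each $M(e)$ the $\mathtt{rcv}(\ell)$ is matched with the $\mathtt{snd}(\ell)$ of the same $M(e)$; for each write $e$ and $1\le i\le p_e$, the $\mathtt{snd}(\mathtt{ch}_x^i)$ of $M(e)$ is matched with the $\mathtt{rcv}(\mathtt{ch}_x^i)$ of $M(f_i)$; for $p_e<j\le m_x$, the $\mathtt{snd}(\mathtt{ch}_x^j)$ of $M(e)$ is matched with the $\mathtt{rcv}(\mathtt{ch}_x^j)$ of $M(e)$. *)

(* Defs.v *)
From mathcomp Require Import all_boot.
Set Implicit Arguments. Unset Strict Implicit. Unset Printing Implicit Defensive.

(* An abstract execution <S, po> over an event type T: S is a finite
   duplicate-free list of events; every event has a thread [thr], an
   operation [issnd] (true = snd, false = rcv) and a channel [chan].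
   Values are irrelevant (as stated in the paper), so condition (iii)
   of well-formedness is omitted. *)
Section Channels.
Variables (T Th C : eqType) (thr : T -> Th) (issnd : T -> bool) (chan : T -> C).

Definition nsnd (pi : seq T) (ch : C) := count (fun a => issnd a && (chan a == ch)) pi.
Definition nrcv (pi : seq T) (ch : C) := count (fun a => ~~ issnd a && (chan a == ch)) pi.

Definition well_formed (cap : C -> nat) (sigma : seq T) : Prop :=
  (forall ch, 0 < cap ch -> forall n,
      nrcv (take n sigma) ch <= nsnd (take n sigma) ch <= nrcv (take n sigma) ch + cap ch)
  /\
  (forall ch, cap ch = 0 -> forall s1 a s2, sigma = s1 ++ a :: s2 -> chan a = ch ->
      (issnd a -> exists b s3, s2 = b :: s3 /\ ~~ issnd b /\ chan b = ch /\ thr b <> thr a)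
   /\ (~~ issnd a -> exists s0 b, s1 = rcons s0 b /\ issnd b /\ chan b = ch /\ thr b <> thr a)).

Definition exec_po (sigma : seq T) (a b : T) : bool :=
  [&& a \in sigma, b \in sigma, thr a == thr b & index a sigma < index b sigma].

Definition sends (sigma : seq T) ch := [seq a <- sigma | issnd a && (chan a == ch)].
Definition rcvs (sigma : seq T) ch := [seq a <- sigma | ~~ issnd a && (chan a == ch)].
Definition exec_rf (sigma : seq T) (s r : T) : Prop :=
  exists ch i, [&& i < size (sends sigma ch), nth s (sends sigma ch) i == s,
                   i < size (rcvs sigma ch) & nth r (rcvs sigma ch) i == r].

Definition vch_consistent (S : seq T) (po : rel T) (cap : C -> nat) (rf : rel T) : Prop :=
  exists sigma : seq T,
    [/\ uniq sigma, sigma =i S,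
        (forall a b, a \in S -> b \in S -> po a b = exec_po sigma a b),
        well_formed cap sigma &
        (forall a b, a \in S -> b \in S -> rf a b <-> exec_rf sigma a b)].
End Channels.

(* Events are the elements of a finite type E; [isw e] = e is a write,
   [reg e] its register, [rf] maps each read to its write (its value on
   writes is irrelevant). *)
Section VSC.
Variables (E : finType) (Th Rg : eqType) (thr : E -> Th) (isw : E -> bool)
  (reg : E -> Rg) (po : rel E) (rf : E -> E).

Definition vsc_po_ok : Prop :=
  [/\ forall e, ~~ po e e,
      forall e f g, po e f -> po f g -> po e g,
      forall e f, thr e = thr f -> e <> f -> po e f \/ po f e &
      forall e f, po e f -> thr e = thr f].

Definition vsc_rf_ok : Prop :=
  forall r, ~~ isw r -> isw (rf r) /\ reg (rf r) = reg r.

Definition seq_consistent : Prop :=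
  exists s : seq E,
    [/\ uniq s, forall e, e \in s,
        (forall a b, po a b -> index a s < index b s) &
        (forall r, ~~ isw r ->
           index (rf r) s < index r s /\
           forall w, isw w -> reg w = reg r -> w <> rf r ->
             ~ (index (rf r) s < index w s < index r s))].

Definition p_of (e : E) : nat := #|[pred f | ~~ isw f & rf f == e]|.
Definition m_of (x : Rg) : nat := \max_(e | isw e && (reg e == x)) p_of e.

(* Channels: None = l, Some (x, i) = ch_x^i *)
Definition chan_t := option (Rg * nat).

Variable num : E -> nat.  (* the enumeration: read f is f_(num f) of write rf f *)

(* M(e) as a list of (is_snd, channel) *)
Definition Mseq (e : E) : seq (bool * chan_t) :=
  if isw e then
    (true, None) ::
    [seq (true, Some (reg e, i)) | i <- iota 1 (m_of (reg e))] ++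
    [seq (false, Some (reg e, j)) | j <- iota (p_of e).+1 (m_of (reg e) - p_of e)] ++
    [:: (false, None)]
  else [:: (true, None); (false, Some (reg e, num e)); (false, None)].

(* events of X' : pairs (e, k) = k-th event of M(e) *)
Definition ev' := (E * nat)%type.
Definition S' : seq ev' :=
  flatten [seq [seq (e, k) | k <- iota 0 (size (Mseq e))] | e <- enum E].
Definition thr' (a : ev') : Th := thr a.1.
Definition issnd' (a : ev') : bool := (nth (true, None) (Mseq a.1) a.2).1.
Definition chan' (a : ev') : chan_t := (nth (true, None) (Mseq a.1) a.2).2.
Definition cap' (ch : chan_t) : nat := 1.
Definition po' (a b : ev') : bool :=
  ((a.1 == b.1) && (a.2 < b.2)) || po a.1 b.1.
Definition rf' (a b : ev') : bool :=
  (* rcv(l) of M(e) matched with snd(l) of M(e) *)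
  [|| [&& a.1 == b.1, a.2 == 0 & b.2 == (size (Mseq a.1)).-1]
    (* snd(ch_x^i) of M(e), 1 <= i <= p_e, matched with rcv(ch_x^i) of M(f_i) *)
    , [&& isw a.1, ~~ isw b.1, rf b.1 == a.1, a.2 == num b.1 & b.2 == 1]
    (* snd(ch_x^j) of M(e), p_e < j <= m_x, matched with rcv(ch_x^j) of M(e) *)
    | [&& isw a.1, b.1 == a.1, p_of a.1 < a.2 <= m_of (reg a.1)
        & b.2 == a.2 + (m_of (reg a.1) - p_of a.1)]].

Definition num_ok : Prop :=
  (forall f, ~~ isw f -> 1 <= num f <= p_of (rf f)) /\
  (forall f g, ~~ isw f -> ~~ isw g -> rf f = rf g -> num f = num g -> f = g).

Definition vch_instance_consistent : Prop :=
  vch_consistent thr' issnd' chan' S' po' cap' rf'.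
End VSC.

(* Main.v *)
Require Import Defs.
From mathcomp Require Import all_boot zify.
Set Implicit Arguments. Unset Strict Implicit. Unset Printing Implicit Defensive.


Section Gen.
Variable T : eqType.
Implicit Types (l : seq T) (P : pred T).

Lemma idx_filter P l x : x \in l -> P x ->
  index x (filter P l) = count P (take (index x l) l).
Proof.
elim: l => //= y l IH; rewrite in_cons; case: (eqVneq y x) => [->|ne] /=.
  by move=> _ Px; rewrite Px /= eqxx.
move=> xl Px; case: (P y) => /=; rewrite ?(negbTE ne) /= IH //.
Qed.

Lemma count_take_mono P l n1 n2 : n1 <= n2 -> count P (take n1 l) <= count P (take n2 l).
Proof.
move=> le; rewrite -(subnKC le) takeD count_cat; exact: leq_addr.
Qed.

Lemma count_take_S P l x0 n : n < size l ->
  count P (take n.+1 l) = count P (take n l) + P (nth x0 l n).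
Proof. by move=> lt; rewrite (take_nth x0 lt) -cats1 count_cat /= addn0. Qed.

Lemma count_take_gap P l x0 n d : n + d <= size l ->
  (forall k, n <= k < n + d -> ~~ P (nth x0 l k)) ->
  count P (take (n + d) l) = count P (take n l).
Proof.
elim: d => [|d IH] le H; first by rewrite addn0.
rewrite addnS (count_take_S _ x0); last by lia.
rewrite IH; last (move=> k hk; apply: H; lia); last lia.
by rewrite (negbTE (H (n + d) _)) ?addn0 //; lia.
Qed.

Lemma next_filter P l x0 a b : uniq l -> a \in l -> b \in l -> P a -> P b ->
  index a l < index b l ->
  (forall k, index a l < k < index b l -> ~~ P (nth x0 l k)) ->
  index b (filter P l) = (index a (filter P l)).+1.
Proof.
move=> ul al bl Pa Pb lt H; rewrite !idx_filter //.
have sb : index b l < size l by rewrite index_mem.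
have -> : index b l = (index a l).+1 + (index b l - (index a l).+1) by lia.
rewrite (count_take_gap (x0:=x0)); last (move=> k hk; apply: H; lia); last lia.
rewrite (count_take_S _ x0); last lia.
by rewrite nth_index // Pa addn1.
Qed.

Lemma filter_take P l n : filter P (take n l) = take (count P (take n l)) (filter P l).
Proof.
elim: l n => [|y l IH] [|n] //=; first by rewrite take0.
case: (P y) => /=; by rewrite IH.
Qed.

Lemma idx_eq l x y : x \in l -> index x l = index y l -> x = y.
Proof.
move=> xl e; have yl : y \in l by rewrite -index_mem -e index_mem.
by rewrite -(nth_index x xl) e nth_index.
Qed.

End Gen.


Section Gen2.
Variables (T Th C : eqType) (thr : T -> Th) (issnd : T -> bool) (chan : T -> C).
Definition sn ch := fun a => issnd a && (chan a == ch).
Definition rc ch := fun a => ~~ issnd a && (chan a == ch).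
Definition rk (s : seq T) P a := count P (take (index a s) s).

Definition wf1 (s : seq T) := forall ch n,
  count (rc ch) (take n s) <= count (sn ch) (take n s) <= count (rc ch) (take n s) + 1.

Lemma wf1_of s : well_formed thr issnd chan (fun _ => 1) s -> wf1 s.
Proof. by case=> H _ ch n; apply: H. Qed.

Lemma exec_rf_rank s a b : uniq s -> exec_rf issnd chan s a b ->
  exists ch, [/\ a \in s, b \in s, sn ch a, rc ch b & rk s (sn ch) a = rk s (rc ch) b].
Proof.
move=> us [ch [i /and4P[i1 /eqP e1 i2 /eqP e2]]]; exists ch.
have ma : a \in sends issnd chan s ch by rewrite -e1 mem_nth.
have mb : b \in rcvs issnd chan s ch by rewrite -e2 mem_nth.
move: (ma) (mb); rewrite !mem_filter => /andP[sa ain] /andP[rb bin].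
split=> //; rewrite /rk -!idx_filter //.
have ->: index a (sends issnd chan s ch) = i by rewrite -e1 index_uniq // filter_uniq.
by rewrite -e2 index_uniq // filter_uniq.
Qed.

Lemma snrc ch a : sn ch a -> rc ch a = false.
Proof. by rewrite /sn /rc => /andP[->]. Qed.

Lemma fifo s ch a b : uniq s -> wf1 s -> a \in s -> b \in s -> sn ch a -> rc ch b ->
  rk s (sn ch) a = rk s (rc ch) b -> index a s < index b s.
Proof.
move=> us w ain bin sa rb e; rewrite ltnNge; apply/negP => le.
have ne : a != b by apply/eqP => eab; move: rb; rewrite -eab snrc.
have lt : index b s < index a s.
  rewrite ltn_neqAle le andbT; apply/negP => /eqP /esym /(idx_eq ain) /eqP; by rewrite (negbTE ne).
have := w ch (index b s).+1 => /andP[h _].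
rewrite (count_take_S _ b) ?index_mem // nth_index // rb in h.
have := count_take_mono (sn ch) s lt; move: e h; rewrite /rk /= addn1; lia.
Qed.

Lemma cap1 s ch a b a' : uniq s -> wf1 s -> a \in s -> b \in s -> a' \in s ->
  sn ch a -> rc ch b -> sn ch a' -> rk s (sn ch) a = rk s (rc ch) b ->
  index a s < index a' s -> index b s < index a' s.
Proof.
move=> us w ain bin a'in sa rb sa' e lt; rewrite ltnNge; apply/negP => le.
have ne : a' != b by apply/eqP => eab; move: rb; rewrite -eab snrc.
have lt2 : index a' s < index b s.
  rewrite ltn_neqAle le andbT; apply/negP => /eqP /(idx_eq a'in) /eqP; by rewrite (negbTE ne).
have := w ch (index a' s).+1 => /andP[_ h].
rewrite !(count_take_S _ a') ?index_mem // nth_index // sa' (snrc sa') in h.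
have h1 := count_take_mono (sn ch) s lt.
rewrite (count_take_S _ a) ?index_mem // nth_index // sa in h1.
have h2 := count_take_mono (rc ch) s lt2.
rewrite (count_take_S _ a') ?index_mem // nth_index // (snrc sa') in h2.
move: e h h1 h2; rewrite /rk /=; lia.
Qed.

Definition fl (P : seq (T * T)) := flatten [seq [:: q.1; q.2] | q <- P].

Lemma pairing (R : rel T) u : uniq u ->
  (forall a, a \in u -> issnd a -> exists b, [/\ R a b, b \in u & index b u = (index a u).+1]) ->
  (forall b, b \in u -> ~~ issnd b -> exists a, [/\ R a b, a \in u & index b u = (index a u).+1]) ->
  (forall a b, R a b -> issnd a && ~~ issnd b) ->
  exists P, u = fl P /\ (forall q, q \in P -> R q.1 q.2).
Proof.
move=> + + + HR; have [n] := ubnP (size u); elim: n u => // n IH [|a u] sz uu H1 H2.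
  by exists [::].
have aa : a \in a :: u by rewrite mem_head.
case sa: (issnd a); last first.
  have [a' [_ _]] := H2 a aa (negbT sa); by rewrite /= eqxx.
have [b [Rab bin ib]] := H1 a aa sa; clear aa.
have /andP[_ rb] := HR _ _ Rab.
have nab : a != b by apply/eqP=> e; move: rb; rewrite -e sa.
rewrite /= eqxx (negbTE nab) in ib.
case: u sz uu H1 H2 bin ib => [|b' u] sz uu H1 H2 bin ib.
  by move: bin; rewrite inE eq_sym (negbTE nab).
have eb : b' = b by move: ib => /=; case: (eqVneq b' b).
subst b'; rename b into b'; have nab' := nab.
move: uu => /andP[]; rewrite in_cons negb_or => /andP[nab0 nau] /andP[nbu uu].
have idxu c : c \in u -> index c [:: a, b' & u] = (index c u).+2.
  move=> cu /=; case: (eqVneq a c) => [ac|_]; first by move: nau; rewrite ac cu.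
  by case: (eqVneq b' c) => [bc|_] //; move: nbu; rewrite bc cu.
have [P [eP RP]] : exists P, u = fl P /\ (forall q, q \in P -> R q.1 q.2).
  apply: IH => //.
  - by move: sz => /=; lia.
  - move=> c cu sc.
    have cin : c \in [:: a, b' & u] by rewrite !in_cons cu !orbT.
    have [d [Rcd din idd]] := H1 c cin sc; rewrite (idxu c cu) in idd.
    move: din idd; rewrite !in_cons => /orP[/eqP ->|/orP[/eqP ->|du]].
    + by rewrite /= eqxx.
    + by rewrite /= (negbTE nab') eqxx.
    + by rewrite idxu // => -[] idd; exists d.
  - move=> c cu sc.
    have cin : c \in [:: a, b' & u] by rewrite !in_cons cu !orbT.
    have [d [Rdc din idd]] := H2 c cin sc; rewrite (idxu c cu) in idd.
    move: din idd; rewrite !in_cons => /orP[/eqP ed|/orP[/eqP ed|du]].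
    + by rewrite ed /= eqxx.
    + by move: (HR _ _ Rdc); rewrite ed (negbTE rb).
    + by rewrite idxu // => -[] idd; exists d.
exists ((a, b') :: P); split; first by rewrite /fl /= -/(fl P) -eP.
by move=> q; rewrite in_cons => /orP[/eqP ->|/RP].
Qed.

Lemma mem_behead' (q : T * T) P q' : q' \in P -> q' \in q :: P.
Proof. by move=> h; rewrite in_cons h orbT. Qed.

Lemma fl_filter P : (forall q, q \in P -> issnd q.1 && ~~ issnd q.2) ->
  filter issnd (fl P) = map fst P /\ filter (predC issnd) (fl P) = map snd P.
Proof.
elim: P => [|q P IH] //= H.
have /andP[-> /negbTE ->] := H q (mem_head _ _).
have [-> ->] := IH (fun q' hq' => H q' (mem_behead' q hq')).
by [].
Qed.

Lemma fl_count P n : (forall q, q \in P -> issnd q.1 && ~~ issnd q.2) ->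
  count (predC issnd) (take n (fl P)) <= count issnd (take n (fl P)) <=
  count (predC issnd) (take n (fl P)) + 1.
Proof.
elim: P n => [|q P IH] n H; first by rewrite /fl /=.
have /andP[s1 r2] := H q (mem_head _ _).
have IH' := IH _ (fun q' hq' => H q' (mem_behead' q hq')).
case: n => [|[|n]]; rewrite /fl /= -/(fl P) /= ?s1 ?(negbTE r2) //=.
by have := IH' n; lia.
Qed.

Lemma wf_ch s ch P :
  filter (fun a => chan a == ch) s = fl P ->
  (forall q, q \in P -> issnd q.1 && ~~ issnd q.2) ->
  forall n, nrcv issnd chan (take n s) ch <= nsnd issnd chan (take n s) ch <=
            nrcv issnd chan (take n s) ch + 1.
Proof.
move=> HP Hq n; rewrite /nrcv /nsnd.
have e1 : count (fun a => ~~ issnd a && (chan a == ch)) (take n s) =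
  count (predC issnd) (filter (fun a => chan a == ch) (take n s)) by rewrite count_filter.
have e2 : count (fun a => issnd a && (chan a == ch)) (take n s) =
  count issnd (filter (fun a => chan a == ch) (take n s)) by rewrite count_filter.
rewrite e1 e2 filter_take HP; exact: fl_count Hq.
Qed.

Lemma exec_rf_ch s ch P a b :
  filter (fun a => chan a == ch) s = fl P ->
  (forall q, q \in P -> issnd q.1 && ~~ issnd q.2) ->
  (exists i, [&& i < size (sends issnd chan s ch), nth a (sends issnd chan s ch) i == a,
                   i < size (rcvs issnd chan s ch) & nth b (rcvs issnd chan s ch) i == b])
  <-> (a, b) \in P.
Proof.
move=> HP Hq.
have es : sends issnd chan s ch = map fst P.
  rewrite /sends -(fl_filter Hq).1 -HP -filter_predI; exact: eq_filter.
have er : rcvs issnd chan s ch = map snd P.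
  rewrite /rcvs -(fl_filter Hq).2 -HP -filter_predI; exact: eq_filter.
split.
  move=> [i]; rewrite es er !size_map => /and4P[i1 /eqP e1 _ /eqP e2].
  rewrite (nth_map (a, b)) // in e1; rewrite (nth_map (a, b)) // in e2.
  have eq : nth (a, b) P i = (a, b) by move: e1 e2; case: (nth _ _ _) => x y /= -> ->.
  by rewrite -{1}eq mem_nth.
move=> hin; exists (index (a, b) P); rewrite es er !size_map index_mem hin.
by rewrite !(nth_map (a, b)) ?index_mem // nth_index //= !eqxx.
Qed.

End Gen2.


Section Spec.
Variables (E : finType) (Th Rg : eqType) (thr : E -> Th) (isw : E -> bool)
  (reg : E -> Rg) (po : rel E) (rf : E -> E) (num : E -> nat).

Local Notation Ms := (Mseq isw reg rf num).
Local Notation pp := (p_of isw rf).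
Local Notation mm := (m_of isw reg rf).
Local Notation isd := (issnd' isw reg rf num).
Local Notation chn := (chan' isw reg rf num).

Lemma p_le_m e : isw e -> pp e <= mm (reg e).
Proof. by move=> ew; apply: (@leq_bigmax_cond _ (fun e0 => isw e0 && (reg e0 == reg e))); rewrite ew eqxx. Qed.

Lemma size_MsW e : isw e -> size (Ms e) = (mm (reg e) + (mm (reg e) - pp e)).+2.
Proof. move=> ew; rewrite /Mseq ew /= !size_cat !size_map !size_iota /=; lia. Qed.

Lemma MsR e : ~~ isw e -> Ms e = [:: (true, None); (false, Some (reg e, num e)); (false, None)].
Proof. by move=> /negbTE ew; rewrite /Mseq ew. Qed.

Lemma nth_MsW e k : isw e -> k < size (Ms e) ->
  nth (true, None) (Ms e) k =
  if k == 0 then (true, None)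
  else if k <= mm (reg e) then (true, Some (reg e, k))
  else if k <= mm (reg e) + (mm (reg e) - pp e) then (false, Some (reg e, k - mm (reg e) + pp e))
  else (false, None).
Proof.
move=> ew; rewrite size_MsW //; have pm := p_le_m ew.
rewrite /Mseq ew; set m := mm (reg e); set p := pp e.
case: k => [|k] //= lt.
rewrite nth_cat size_map size_iota; case: ifP => h1.
  by rewrite (nth_map 0) ?size_iota // nth_iota // h1 add1n.
rewrite nth_cat size_map size_iota; case: ifP => h2.
  rewrite (nth_map 0) ?size_iota // nth_iota //.
  have -> : k < m + (m - p) by lia.
  by have -> : p.+1 + (k - m) = k.+1 - m + p by lia.
have -> : (k < m + (m - p)) = false by lia.
have -> : k - m - (m - p) = 0 by lia.
by [].
Qed.

Lemma isdW e k : isw e -> k < size (Ms e) -> isd (e, k) = (k <= mm (reg e)).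
Proof.
move=> ew lt; rewrite /issnd' /= nth_MsW //; move: lt; rewrite size_MsW //.
by case: ifP => [/eqP->|_] //; case: ifP => // h1; case: ifP => // h2 _; rewrite h1.
Qed.

Lemma chnW e k : isw e -> k < size (Ms e) -> chn (e, k) =
  if k == 0 then None
  else if k <= mm (reg e) then Some (reg e, k)
  else if k <= mm (reg e) + (mm (reg e) - pp e) then Some (reg e, k - mm (reg e) + pp e)
  else None.
Proof.
move=> ew lt; rewrite /chan' /= nth_MsW //.
by case: ifP => // _; case: ifP => // _; case: ifP.
Qed.

Lemma isdR e k : ~~ isw e -> k < 3 -> isd (e, k) = (k == 0).
Proof. by move=> ew; rewrite /issnd' /= MsR //; case: k => [|[|[|]]]. Qed.

Lemma chnR e k : ~~ isw e -> chn (e, k) = if k == 1 then Some (reg e, num e) else None.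
Proof. by move=> ew; rewrite /chan' /= MsR //; case: k => [|[|[|k]]] //=; case: k. Qed.

Definition blk e := [seq (e, k) | k <- iota 0 (size (Ms e))].
Definition blocks (s : seq E) := flatten [seq blk e | e <- s].

Lemma SS_blocks : S' isw reg rf num = blocks (enum E).
Proof. by []. Qed.

Lemma mem_blk x e k : ((e, k) \in blk x) = (e == x) && (k < size (Ms e)).
Proof.
rewrite /blk; apply/mapP/andP => [[k' kin [-> ->]]|[/eqP -> lt]]; last by exists k; rewrite ?mem_iota.
by rewrite mem_iota in kin.
Qed.

Lemma mem_blocks s e k : ((e, k) \in blocks s) = (e \in s) && (k < size (Ms e)).
Proof.
elim: s => [|x s IH] //=; rewrite /blocks /= -/(blocks s) mem_cat IH mem_blk in_cons.
by rewrite andb_orl.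
Qed.

Lemma uniq_blk x : uniq (blk x).
Proof. by rewrite map_inj_uniq ?iota_uniq // => ? ? []. Qed.

Lemma uniq_blocks s : uniq s -> uniq (blocks s).
Proof.
elim: s => [|x s IH] //= /andP[xs us]; rewrite /blocks /= -/(blocks s) cat_uniq uniq_blk IH //=.
rewrite andbT; apply/hasPn => -[e k]; rewrite mem_blocks => /andP[es _]; rewrite mem_blk.
by apply/negP => /andP[/eqP ex _]; rewrite -ex es in xs.
Qed.

Definition off (s : seq E) n := sumn [seq size (Ms e) | e <- take n s].

Lemma idx_blocks s e k : e \in s -> k < size (Ms e) ->
  index (e, k) (blocks s) = off s (index e s) + k.
Proof.
elim: s => [|x s IH] //= ein lt; rewrite /blocks /= -/(blocks s) index_cat mem_blk.
case: (eqVneq e x) => [ex|nex] /=.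
  subst x; rewrite lt /off /= add0n /blk index_map ?index_iota //=.
    by rewrite -{1}(add0n k) -(nth_iota 0 0 lt) index_uniq ?size_iota ?iota_uniq.
  by move=> ? ? [].
have ein' : e \in s by move: ein; rewrite in_cons (negbTE nex).
rewrite IH // /off /= /blk size_map size_iota; lia.
Qed.

Lemma off_mono s n1 n2 : n1 <= n2 -> off s n1 <= off s n2.
Proof. by move=> le; rewrite /off -(subnKC le) takeD map_cat sumn_cat leq_addr. Qed.


Lemma off_lt s e e' : uniq s -> e \in s -> e' \in s -> index e s < index e' s ->
  off s (index e s) + size (Ms e) <= off s (index e' s).
Proof.
move=> us ein e'in lt; apply: leq_trans (off_mono s lt).
rewrite /off (take_nth e) ?index_mem // -cats1 map_cat sumn_cat nth_index //=; lia.
Qed.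

Lemma lex_blocks s e k e' k' : uniq s -> e \in s -> e' \in s ->
  k < size (Ms e) -> k' < size (Ms e') ->
  (index (e, k) (blocks s) < index (e', k') (blocks s)) =
  (index e s < index e' s) || ((e == e') && (k < k')).
Proof.
move=> us ein e'in lt lt'; rewrite !idx_blocks //.
case: (ltngtP (index e s) (index e' s)) => h.
- by have := off_lt us ein e'in h; lia.
- have := off_lt us e'in ein h; have -> : (e == e') = false.
    by apply/negP => /eqP ee; rewrite ee ltnn in h.
  lia.
- by have -> := idx_eq ein h; rewrite eqxx /= ltn_add2l.
Qed.

End Spec.


Section Basic.
Variables (E : finType) (Th Rg : eqType) (thr : E -> Th) (isw : E -> bool)
  (reg : E -> Rg) (po : rel E) (rf : E -> E) (num : E -> nat).
Hypotheses (Hpo : vsc_po_ok thr po) (Hrf : vsc_rf_ok isw reg rf) (Hnum : num_ok isw rf num).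

Local Notation Ms := (Mseq isw reg rf num).
Local Notation pp := (p_of isw rf).
Local Notation mm := (m_of isw reg rf).
Local Notation isd := (issnd' isw reg rf num).
Local Notation chn := (chan' isw reg rf num).
Local Notation SS := (S' isw reg rf num).
Local Notation rff := (rf' isw reg rf num).

Lemma memSS e k : ((e, k) \in SS) = (k < size (Ms e)).
Proof. by rewrite SS_blocks mem_blocks mem_enum. Qed.

Lemma size_ge2 e : 1 < size (Ms e).
Proof. by case ew: (isw e); [rewrite size_MsW | rewrite MsR ?ew]. Qed.

Lemma isd0 e : isd (e, 0).
Proof. by rewrite /issnd' /Mseq; case: (isw e). Qed.

Lemma chn0 e : chn (e, 0) = None.
Proof. by rewrite /chan' /Mseq; case: (isw e). Qed.

Lemma isdlast e : isd (e, (size (Ms e)).-1) = false.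
Proof.
case ew: (isw e); last by rewrite isdR ?ew // MsR ?ew.
rewrite isdW // size_MsW //=; lia.
Qed.

Lemma chnNone e k : k < size (Ms e) ->
  (chn (e, k) == None) = (k == 0) || (k == (size (Ms e)).-1).
Proof.
case ew: (isw e).
  move=> lt; rewrite chnW //; move: lt; rewrite size_MsW //= => lt.
  have sn (y : Rg * nat) : (Some y == None) = false by [].
  case: ifP => [/eqP ->|h0] //=; case: ifP => h1 /=.
    by rewrite sn; symmetry; apply/negbTE/eqP; lia.
  case: ifP => h2 /=.
    by rewrite sn; symmetry; apply/negbTE/eqP; lia.
  by rewrite eqxx; symmetry; apply/eqP; lia.
by rewrite chnR ?ew // MsR ?ew //; case: k => [|[|[|]]].
Qed.

Lemma surj w i : isw w -> 1 <= i <= pp w -> exists f, [/\ ~~ isw f, rf f = w & num f = i].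
Proof.
move=> ww hi; have [Hn1 Hn2] := Hnum.
set A := enum [pred f | ~~ isw f & rf f == w].
have uA : uniq [seq num f | f <- A].
  rewrite map_inj_in_uniq ?enum_uniq // => f g; rewrite !mem_enum => /andP[f1 /eqP f2] /andP[g1 /eqP g2] e.
  by apply: Hn2 => //; rewrite f2 g2.
have sub : {subset [seq num f | f <- A] <= iota 1 (pp w)}.
  move=> n /mapP[f]; rewrite mem_enum => /andP[f1 /eqP f2] ->; rewrite mem_iota.
  have := Hn1 f f1; rewrite f2; lia.
have sz : size (iota 1 (pp w)) <= size [seq num f | f <- A].
  by rewrite size_iota size_map -cardE.
have [_ eqm] := uniq_min_size uA sub sz.
have : i \in iota 1 (pp w) by rewrite mem_iota; lia.
rewrite -eqm => /mapP[f]; rewrite mem_enum => /andP[f1 /eqP f2] ->; by exists f.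
Qed.

Lemma partner_snd a : a \in SS -> isd a -> exists b, rff a b /\ b \in SS.
Proof.
case: a => e k; rewrite memSS => lt sa.
case: (eqVneq k 0) => [->|k0].
  exists (e, (size (Ms e)).-1); rewrite memSS /rf' /= !eqxx /=; split=> //.
  have := size_ge2 e; lia.
case ew: (isw e); last by move: sa; rewrite isdR ?ew ?(negbTE k0) //; move: lt; rewrite MsR ?ew.
move: sa; rewrite isdW // => km.
have pm := p_le_m reg rf ew.
case: (leqP k (pp e)) => kp.
  have hk : 1 <= k <= pp e by lia.
  have [f [fr rfe nf]] := surj ew hk.
  exists (f, 1); rewrite memSS MsR //; split=> //.
  by rewrite /rf' /= ew fr rfe nf !eqxx /= orbT.
exists (e, k + (mm (reg e) - pp e)); rewrite memSS size_MsW //; split; last by lia.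
rewrite /rf' /= ew !eqxx kp km /=; by rewrite !orbT.
Qed.

Lemma partner_rcv b : b \in SS -> ~~ isd b -> exists a, rff a b /\ a \in SS.
Proof.
case: b => e k; rewrite memSS => lt sb.
case: (eqVneq k (size (Ms e)).-1) => [->|kl].
  exists (e, 0); rewrite memSS /rf' /= !eqxx /=; split=> //; have := size_ge2 e; lia.
case ew: (isw e); last first.
  have k1 : k = 1.
    have lt3 : k < 3 by move: lt; rewrite MsR ?ew.
    move: sb kl; rewrite isdR ?ew // MsR ?ew //=; clear lt; move: lt3; case: k => [|[|[|]]] //.
  have [w1 w2] := Hrf (negbT ew).
  have [Hn1 _] := Hnum.
  exists (rf e, num e); rewrite memSS /rf' /= k1 w1 ew !eqxx /= orbT; split=> //.
  rewrite size_MsW //; have := p_le_m reg rf w1; have := Hn1 e (negbT ew); lia.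
move: sb; rewrite isdW // -ltnNge => km.
have pm := p_le_m reg rf ew.
move: lt kl; rewrite size_MsW //= => lt kl.
exists (e, k - mm (reg e) + pp e); rewrite memSS size_MsW //; split; last by lia.
rewrite /rf' /= ew !eqxx /=.
have -> : pp e < k - mm (reg e) + pp e <= mm (reg e) by lia.
have -> : k == k - mm (reg e) + pp e + (mm (reg e) - pp e) by apply/eqP; lia.
by rewrite !orbT.
Qed.

End Basic.


Section Fwd.
Variables (E : finType) (Th Rg : eqType) (thr : E -> Th) (isw : E -> bool)
  (reg : E -> Rg) (po : rel E) (rf : E -> E) (num : E -> nat).
Hypotheses (Hpo : vsc_po_ok thr po) (Hrf : vsc_rf_ok isw reg rf) (Hnum : num_ok isw rf num).

Local Notation Ms := (Mseq isw reg rf num).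
Local Notation pp := (p_of isw rf).
Local Notation mm := (m_of isw reg rf).
Local Notation isd := (issnd' isw reg rf num).
Local Notation chn := (chan' isw reg rf num).
Local Notation SS := (S' isw reg rf num).
Local Notation rff := (rf' isw reg rf num).

Variable s : seq E.
Hypotheses (us : uniq s) (alls : forall e, e \in s)
  (Hpos : forall a b, po a b -> index a s < index b s)
  (Hrfs : forall r, ~~ isw r ->
           index (rf r) s < index r s /\
           forall w, isw w -> reg w = reg r -> w <> rf r ->
             ~ (index (rf r) s < index w s < index r s)).

Local Notation sig := (blocks isw reg rf num s).

Lemma memsig a : (a \in sig) = (a \in SS).
Proof. by case: a => e k; rewrite mem_blocks memSS alls. Qed.

Lemma lexs e k e' k' : (e, k) \in SS -> (e', k') \in SS ->
  (index (e, k) sig < index (e', k') sig) =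
  (index e s < index e' s) || ((e == e') && (k < k')).
Proof. by rewrite !memSS => h h'; rewrite lex_blocks. Qed.

Lemma between a b (P : pred (E * nat)) : a \in SS ->
  (forall c, c \in SS -> index a sig < index c sig < index b sig -> ~~ P c) ->
  forall k, index a sig < k < index b sig -> ~~ P (nth a sig k).
Proof.
move=> aS H k hk; have ks : k < size sig.
  have : index b sig <= size sig by rewrite index_size.
  lia.
have cin : nth a sig k \in sig by rewrite mem_nth.
apply: H; first by rewrite -memsig.
by rewrite index_uniq // uniq_blocks.
Qed.

Lemma idx_s_inj e e' : index e s = index e' s -> e = e'.
Proof. by apply: idx_eq. Qed.

Lemma rf_next a b : a \in SS -> b \in SS -> rff a b ->
  [/\ isd a, ~~ isd b, chn b = chn a &
      index b (filter (fun c => chn c == chn a) sig) =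
      (index a (filter (fun c => chn c == chn a) sig)).+1].
Proof.
move=> aS bS Hab.
suff [h1 h2 h3 h4 h5] : [/\ isd a, ~~ isd b, chn b = chn a, index a sig < index b sig &
   forall c, c \in SS -> index a sig < index c sig < index b sig -> chn c != chn a].
  split=> //; apply: (@next_filter _ (fun c => chn c == chn a) sig a a b) => //.
  - exact: uniq_blocks.
  - by rewrite memsig.
  - by rewrite memsig.
  - by rewrite h3.
  - exact: (@between a b (fun c => chn c == chn a) aS h5).
case: a b aS bS Hab => [e k] [e' k'] aS bS.
have aS' := aS; have bS' := bS; rewrite memSS in aS'; rewrite memSS in bS'.
case/or3P => /=.
-
  move=> /and3P[/eqP ee /eqP k0 /eqP kl]; subst e' k k'.
  have s2 := size_ge2 isw reg rf num e.
  split; rewrite ?isd0 ?isdlast ?chn0 //.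
  + by apply/eqP; rewrite chnNone // eqxx orbT.
  + by rewrite lexs // ltnn eqxx /=; lia.
  + move=> [g j] cS; rewrite !lexs //.
    case: (eqVneq e g) => [<-|neg] /=; rewrite ?ltnn /=.
      move=> hj; move: (cS); rewrite memSS => js; rewrite chnNone //; lia.
    by move=> /andP[h1 h2]; lia.
-
  move=> /and5P[ew fr /eqP rfe /eqP ki /eqP k1]; subst k k'.
  have [Hn1 Hn2] := Hnum.
  have [w1 w2] := Hrf fr; rewrite rfe in w1 w2.
  have hn := Hn1 e' fr; rewrite rfe in hn.
  have pm := p_le_m reg rf ew.
  have [hrf hnb] := Hrfs fr; rewrite rfe in hrf hnb.
  have cha : chn (e, num e') = Some (reg e, num e').
    rewrite chnW //; case: ifP => [/eqP|_]; first lia.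
    by case: ifP => //; lia.
  split.
  + rewrite isdW //; lia.
  + by rewrite isdR.
  + by rewrite chnR // cha w2.
  + by rewrite lexs // hrf.
  move=> [g j] cS; rewrite !lexs // cha => /andP[H1 H2].
  have js : j < size (Ms g) by rewrite -memSS.
  case: (eqVneq g e) => [ge|nge].
    subst g; move: H1; rewrite ltnn eqxx /= => H1.
    rewrite chnW //; case: ifP => _ //; case: ifP => h1.
      by apply/eqP => -[]; lia.
    by case: ifP => h2 //; apply/eqP => -[]; lia.
  case: (eqVneq g e') => [ge'|nge'].
    subst g; move: H2; rewrite ltnn eqxx /= => H2.
    by rewrite chnR //; have -> : (j == 1) = false by lia.
  move: H1 H2; rewrite eq_sym (negbTE nge) (negbTE nge') /= !orbF => H1 H2.
  apply/eqP => hc.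
  case gw: (isw g).
    have rg : reg g = reg e.
      move: hc; rewrite chnW //; case: ifP => _ //; case: ifP => _; first by case.
      by case: ifP => _ //; case.
    by apply: (hnb g gw); [rewrite rg | apply/eqP | lia].
  move: hc; rewrite chnR ?gw //; case: ifP => // _ [rg ng].
  have [w'1 w'2] := Hrf (negbT gw).
  have [hrg hng] := Hrfs (negbT gw).
  case: (eqVneq (rf g) e) => [rge|nrge].
    by move/eqP: nge'; apply; apply: Hn2 => //; [rewrite gw | rewrite rge rfe].
  case: (ltngtP (index (rf g) s) (index e s)) => hc2.
  - by apply: (hng e ew); [rewrite -rg | apply/eqP; rewrite eq_sym | lia].
  - by apply: (hnb (rf g) w'1); [rewrite w'2 rg | apply/eqP | lia].
  - by move/eqP: nrge; apply; apply: idx_s_inj.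
-
  move=> /and4P[ew /eqP ee /andP[kp km] /eqP kk]; subst e' k'.
  have pm := p_le_m reg rf ew.
  have cha : chn (e, k) = Some (reg e, k).
    rewrite chnW //; case: ifP => [/eqP|_]; first lia.
    by rewrite km.
  split.
  + by rewrite isdW.
  + rewrite isdW //; lia.
  + rewrite cha chnW //; case: ifP => [/eqP|_]; first lia.
    case: ifP => h1; first lia.
    case: ifP => h2; last lia.
    by have -> : k + (mm (reg e) - pp e) - mm (reg e) + pp e = k by lia.
  + by rewrite lexs // ltnn eqxx /=; lia.
  move=> [g j] cS; rewrite !lexs // cha.
  have js : j < size (Ms g) by rewrite -memSS.
  case: (eqVneq g e) => [ge|nge]; last by rewrite /= !orbF => /andP[]; lia.
  subst g; rewrite ltnn /= => hj.
  rewrite chnW //; case: ifP => _ //; case: ifP => h1.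
    by apply/eqP => -[]; lia.
  by case: ifP => h2 //; apply/eqP => -[]; lia.
Qed.

Lemma po_fwd a b : a \in SS -> b \in SS ->
  po' po a b = exec_po (thr' thr) sig a b.
Proof.
case: a b => [e k] [e' k'] aS bS.
have [irr _ tot same] := Hpo.
rewrite /po' /exec_po !memsig aS bS lexs //= /thr' /=.
case: (eqVneq e e') => [<-|ne] /=.
  by rewrite (negbTE (irr e)) ltnn eqxx /= orbF.
rewrite orbF; apply/idP/idP.
  by move=> h; rewrite (same _ _ h) eqxx Hpos.
move=> /andP[/eqP th lt]; case: (tot _ _ th) => [|h|h] //; first by apply/eqP.
by have := Hpos h; lia.
Qed.

Definition Rr a b := [&& rff a b, a \in SS & b \in SS].

Lemma HPch ch : exists P, filter (fun c => chn c == ch) sig = fl P /\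
  (forall q, q \in P -> Rr q.1 q.2).
Proof.
apply: (@pairing _ isd); first by rewrite filter_uniq // uniq_blocks.
- move=> a; rewrite mem_filter memsig => /andP[/eqP ca aS] sa.
  have [b [Rab bS]] := partner_snd Hnum aS sa.
  have [_ _ cb nx] := rf_next aS bS Rab.
  exists b; rewrite /Rr Rab aS bS mem_filter memsig bS cb ca eqxx; split=> //.
  by rewrite -ca.
- move=> b; rewrite mem_filter memsig => /andP[/eqP cb bS] sb.
  have [a [Rab aS]] := partner_rcv Hrf Hnum bS sb.
  have [_ _ ca nx] := rf_next aS bS Rab.
  exists a; rewrite /Rr Rab aS bS mem_filter memsig aS -ca cb eqxx; split=> //.
  by rewrite -cb ca.
- move=> a b /and3P[Rab aS bS]; have [-> -> _ _] := rf_next aS bS Rab; by [].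
Qed.

Lemma fwd_consistent : vch_instance_consistent thr isw reg po rf num.
Proof.
have HRq (P : seq ((E * nat) * (E * nat))) (q : (E * nat) * (E * nat)) : (forall q, q \in P -> Rr q.1 q.2) ->
    q \in P -> isd q.1 && ~~ isd q.2.
  move=> H /H /and3P[Rab aS bS]; have [-> -> _ _] := rf_next aS bS Rab; by [].
exists sig; split.
- exact: uniq_blocks.
- by move=> a; rewrite memsig.
- exact: po_fwd.
- split=> // ch _ n; have [P [eP HP]] := HPch ch.
  exact: (wf_ch eP (fun q => HRq P q HP) n).
move=> a b aS bS; split.
  move=> Rab; have [sa _ cb nx] := rf_next aS bS Rab.
  have [P [eP HP]] := HPch (chn a).
  exists (chn a); apply/(exec_rf_ch _ _ eP (fun q => HRq P q HP)).
  have : a \in filter isd (fl P).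
    by rewrite mem_filter sa -eP mem_filter eqxx memsig.
  rewrite (fl_filter (fun q => HRq P q HP)).1 => /mapP[q qP qa].
  have /and3P[Rq _ q2S] := HP q qP.
  rewrite -qa in Rq; have [_ _ cq nq] := rf_next aS q2S Rq.
  have q2u : q.2 \in filter (fun c => chn c == chn a) sig by rewrite mem_filter cq eqxx memsig.
  have e2 : q.2 = b by apply: (idx_eq q2u); rewrite nq nx.
  by rewrite -e2 qa -surjective_pairing.
move=> [ch hrf]; have [P [eP HP]] := HPch ch.
have := (exec_rf_ch _ _ eP (fun q => HRq P q HP)).1 hrf.
by move=> /HP /and3P[].
Qed.

End Fwd.


Section Bwd.
Variables (E : finType) (Th Rg : eqType) (thr : E -> Th) (isw : E -> bool)
  (reg : E -> Rg) (po : rel E) (rf : E -> E) (num : E -> nat).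
Hypotheses (Hpo : vsc_po_ok thr po) (Hrf : vsc_rf_ok isw reg rf) (Hnum : num_ok isw rf num).

Local Notation Ms := (Mseq isw reg rf num).
Local Notation pp := (p_of isw rf).
Local Notation mm := (m_of isw reg rf).
Local Notation isd := (issnd' isw reg rf num).
Local Notation chn := (chan' isw reg rf num).
Local Notation SS := (S' isw reg rf num).
Local Notation rff := (rf' isw reg rf num).

Variable sig : seq (E * nat).
Hypotheses (us : uniq sig) (ms : sig =i SS)
  (pos : forall a b, a \in SS -> b \in SS -> po' po a b = exec_po (thr' thr) sig a b)
  (wfs : well_formed (thr' thr) isd chn (@cap' Rg) sig)
  (rfs : forall a b, a \in SS -> b \in SS -> rff a b <-> exec_rf isd chn sig a b).

Local Notation ix a := (index a sig).
Local Notation z e := (e, (size (Ms e)).-1).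

Lemma w1 : wf1 isd chn sig.
Proof. exact: wf1_of wfs. Qed.

Lemma in0 e : (e, 0) \in SS.
Proof. by rewrite memSS; have := size_ge2 isw reg rf num e; lia. Qed.

Lemma inz e : z e \in SS.
Proof. by rewrite memSS; have := size_ge2 isw reg rf num e; lia. Qed.

Lemma po_lt e k k' : (e, k) \in SS -> (e, k') \in SS -> k < k' -> ix (e, k) < ix (e, k').
Proof.
move=> h h' lt; have := pos h h'; rewrite /po' /= eqxx lt /= => /esym.
by case/and4P.
Qed.

Lemma bounds e k : (e, k) \in SS -> ix (e, 0) <= ix (e, k) <= ix (z e).
Proof.
move=> h; have hk := h; rewrite memSS in hk.
apply/andP; split.
  case: k h hk => [|k] h hk //; by apply/ltnW/po_lt => //; apply: in0.
case: (ltngtP k (size (Ms e)).-1) => c; first by apply/ltnW/po_lt => //; apply: inz.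
  lia.
by rewrite c.
Qed.

Lemma ix_inj a b : a \in SS -> ix a = ix b -> a = b.
Proof. by rewrite -ms; apply: idx_eq. Qed.

Lemma disj e e' : e != e' -> ix (e, 0) < ix (e', 0) -> ix (z e) < ix (e', 0).
Proof.
move=> ne lt.
have R : rff (e, 0) (z e) by rewrite /rf' /= !eqxx.
have [ch [ain zin sa rz rk]] := exec_rf_rank us ((rfs (in0 e) (inz e)).1 R).
apply: (cap1 us w1 ain zin _ sa rz _ rk lt); first by rewrite ms in0.
move: sa; rewrite /sn chn0 => /andP[_ /eqP <-]; by rewrite /sn isd0 chn0 eqxx.
Qed.

Lemma lex_fwd e e' k k' : e != e' -> ix (e, 0) < ix (e', 0) ->
  (e, k) \in SS -> (e', k') \in SS -> ix (e, k) < ix (e', k').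
Proof.
move=> ne lt h h'; have := disj ne lt; have := bounds h; have := bounds h'; lia.
Qed.

Lemma lex_back e e' k k' : e != e' -> (e, k) \in SS -> (e', k') \in SS ->
  ix (e, k) < ix (e', k') -> ix (e, 0) < ix (e', 0).
Proof.
move=> ne h h' lt; case: (ltngtP (ix (e, 0)) (ix (e', 0))) => // c.
  have ne' : e' != e by rewrite eq_sym.
  by have := lex_fwd ne' c h' h; lia.
by have := ix_inj (in0 e) c => -[] /eqP; rewrite (negbTE ne).
Qed.

Definition leT (e e' : E) := ix (e, 0) <= ix (e', 0).
Definition sq := sort leT (enum E).

Lemma sq_uniq : uniq sq.
Proof. by rewrite (perm_uniq (permEl (perm_sort leT _))) enum_uniq. Qed.

Lemma sq_all e : e \in sq.
Proof. by rewrite (perm_mem (permEl (perm_sort leT _))) mem_enum. Qed.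

Lemma ord e e' : (index e sq < index e' sq) = (ix (e, 0) < ix (e', 0)).
Proof.
have tr : transitive leT by move=> x y w; rewrite /leT; apply: leq_trans.
have tot : total leT by move=> x y; rewrite /leT leq_total.
have so := sort_sorted tot (enum E).
case: (ltngtP (index e sq) (index e' sq)) => c.
- have := sorted_ltn_index tr so e e' (sq_all e) (sq_all e') c; rewrite /leT.
  have ne : e != e' by apply/eqP => ee; rewrite ee ltnn in c.
  rewrite leq_eqVlt => /orP[/eqP h|->] //.
  by have := ix_inj (in0 e) h => -[] /eqP; rewrite (negbTE ne).
- have := sorted_ltn_index tr so e' e (sq_all e') (sq_all e) c; rewrite /leT => h; apply/esym/negbTE; by rewrite -leqNgt.
- by have -> := idx_eq (sq_all e) c; rewrite ltnn.
Qed.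

Lemma bwd_sc : seq_consistent isw reg po rf.
Proof.
exists sq; split.
- exact: sq_uniq.
- exact: sq_all.
- move=> a b pab; rewrite ord.
  have := pos (in0 a) (in0 b); rewrite /po' /= pab orbT => /esym.
  by case/and4P.
move=> r rr; have [Hn1 Hn2] := Hnum.
have [w1' w2'] := Hrf rr.
set w := rf r in w1' w2' *; set i := num r.
have hn : 1 <= i <= pp w := Hn1 r rr.
have pm := p_le_m reg rf w1'.
have wS : (w, i) \in SS by rewrite memSS size_MsW //; lia.
have rS : (r, 1) \in SS by rewrite memSS MsR.
have R : rff (w, i) (r, 1) by rewrite /rf' /= w1' rr !eqxx /= orbT.
have [ch [win rin sa rb rk]] := exec_rf_rank us ((rfs wS rS).1 R).
have lt := fifo us w1 win rin sa rb rk.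
have nwr : w != r by apply/eqP => e; move: rr; rewrite -e w1'.
have ltwr := lex_back nwr wS rS lt.
split; first by rewrite ord.
move=> w' ww' rg nw' /andP[]; rewrite !ord => l1 l2.
have ne1 : w != w' by apply/eqP => e; apply: nw'; rewrite -e.
have ne2 : w' != r by apply/eqP => e; move: rr; rewrite -e ww'.
have em : mm (reg w') = mm (reg w) by rewrite rg w2'.
have w'S : (w', i) \in SS.
  rewrite memSS size_MsW //; move: em hn pm; clear; lia.
have rw : reg w' = reg w by rewrite rg w2'.
have cw : chn (w, i) = Some (reg w, i).
  rewrite chnW; [|by []|by rewrite -memSS].
  have -> : (i == 0) = false by move: hn; clear; lia.
  by have -> : i <= mm (reg w) by move: hn pm; clear; lia.
have cw' : chn (w', i) = Some (reg w, i).
  rewrite chnW; [|by []|by rewrite -memSS].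
  have -> : (i == 0) = false by move: hn; clear; lia.
  by rewrite em rw; have -> : i <= mm (reg w) by move: hn pm; clear; lia.
have sw' : isd (w', i).
  rewrite isdW; [|by []|by rewrite -memSS]; rewrite em; move: hn pm; clear; lia.
have sa' : sn isd chn ch (w', i).
  by move: sa; rewrite /sn cw cw' sw'; case/andP.
have w'in : (w', i) \in sig by rewrite ms.
have A := cap1 us w1 win rin w'in sa rb sa' rk (lex_fwd ne1 l1 wS w'S).
have B := lex_fwd ne2 l2 w'S rS.
by rewrite ltnNge (ltnW A) in B.
Qed.

End Bwd.


Theorem mainTheorem13 (E : finType) (Th Rg : eqType) (thr : E -> Th)
  (isw : E -> bool) (reg : E -> Rg) (po : rel E) (rf : E -> E) (num : E -> nat) :
  vsc_po_ok thr po ->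
  vsc_rf_ok isw reg rf ->
  num_ok isw rf num ->
  seq_consistent isw reg po rf <-> vch_instance_consistent thr isw reg po rf num.
Proof.
move=> Hpo Hrf Hnum; split.
- case=> s [us alls Hpos Hrfs]; exact: (fwd_consistent Hpo Hrf Hnum us alls Hpos Hrfs).
- case=> sig [us ms pos wfs rfs]; exact: (bwd_sc Hrf Hnum us ms pos wfs rfs).
Qed.
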